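(* Let $F$ be the fork and let $K,K'$ be proper pseudohexes such that $K$ is obtained from $K'$ by $F$-addition. If every $F$-no-edge of $K$ has both of its endpoints in $V(F_K)$, then $F_K$ can be safely reduced.
   Context: Pseudohex. A pseudohex is a bipartite graph $K$ (parallel edges allowed, no loops) whose edges are coloured blue, red and white, which is either empty or satisfies: (i) the blue edges form vertex-disjoint 6-cycles covering $V(K)$, called the hexagons of $K$; if a hexagon is the 6-cycle $v_0v_1\cdots v_5v_0$ we write $\bar{v_i}=v_{i+3}$ (indices mod 6); (ii) for each vertex $x$, $\{x,\bar x\}$ is a red edge of $K$ (further red edges may exist); (iii) the white edges form a perfect matching of $K$. A white edge $e=\{x,y\}$ is real if $\bar e=\{\bar x,\bar y\}$ is also a white edge and the only red edges sharing a vertex with $e$ or $\bar e$ are $\{x,\bar x\}$ and $\{y,\bar y\}$; non-real white edges are derived. An end is a red edge parallel to a white edge. $G^K$ is the graph whose vertices are the hexagons of $K$, two hexagons being adjacent iff some pair of real white edges $e,\bar e$ joins them. $K$ is proper if it has no end and $G^K$ is 2-connected with no cycle of length 2. Reduction. Let $h$ be a hexagon and $N$ one of the two perfect matchings of its blue 6-cycle. For each edge of $N$, let $P$ be the path formed by that edge and the two white edges adjacent to it. If $P$ is not a cycle of length 2, add a new white edge $e_P$ joining the end vertices of $P$, and for each red edge $\{u,w\}$ with $w$ an interior vertex of $P$ add a red edge $\{u,w'\}$ where $w'$ is the endpoint of $e_P$ in the same bipartition class as $w$. If $P$ is a cycle of length 2, then for each red edge $\{u,w\}$ with $w$ an interior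 vertex of $P$ add a red edge $\{u,\bar u\}$. Finally delete the vertices of $h$. Reducing hexagons $h_1,\dots,h_l$ by perfect matchings $N_1,\dots,N_l$ means performing these reductions successively; its contracted paths are the components (paths and cycles) of the subgraph of $K$ formed by $N_1\cup\dots\cup N_l$ together with all white edges having an endpoint in $V(h_1)\cup\dots\cup V(h_l)$. The reduction is safe if every contracted path/cycle contains at most one derived white edge of $K$; a set of hexagons can be safely reduced if some choice of perfect matchings gives a safe reduction. Fork and addition. The fork $F$ is the tree with vertices $x,y,z,a,b$ and edges $zx,zy,za,ab$; the bold fork has one half-edge at each of $x,y,b$. A graph is obtained from $G'$ by addition of the bold fork if it is obtained from the disjoint union of $G'$ and $F$ by joining each of the three half-edges to a distinct vertex of degree 2 of $G'$. $K$ is obtained from $K'$ by $F$-addition if $G^K$ is obtained from $G^{K'}$ by addition of the bold fork; $F_K$ is the set of hexagons of $K$ corresponding to the vertices of $F$ and $V(F_K)$ the set of their vertices. $F$-no-edges are the derived white edges of $K$ with at least one endpoint in $V(F_K)$. *)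

(* Defs.v *)
From mathcomp Require Import all_boot.
Set Implicit Arguments.
Unset Strict Implicit.
Unset Printing Implicit Defensive.

Inductive colour := Blue | Red | White.
Definition is_blue (c : colour) := if c is Blue then true else false.
Definition is_red (c : colour) := if c is Red then true else false.
Definition is_white (c : colour) := if c is White then true else false.

(* A coloured multigraph (parallel edges allowed: edges are elements of a
   finite type with an endpoint map), together with a bipartition [pside]
   and a map [prot] orienting the blue hexagons (v_i |-> v_{i+1}). *)
Record phex := Phex {
  pV : finType;
  pE : finType;
  pends : pE -> pV * pV;
  pcol : pE -> colour;
  pside : pV -> bool;
  prot : pV -> pV }.

Section PH.
Variable K : phex.
Local Notation V := (pV K).
Local Notation E := (pE K).

Definition blue (e : E) := is_blue (pcol e).
Definition red (e : E) := is_red (pcol e).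
Definition white (e : E) := is_white (pcol e).
Definition end1 (e : E) := (pends e).1.
Definition end2 (e : E) := (pends e).2.

Definition incident (e : E) (v : V) := (end1 e == v) || (end2 e == v).
Definition joins (e : E) (u w : V) :=
  ((end1 e == u) && (end2 e == w)) || ((end1 e == w) && (end2 e == u)).

(* antipodal vertex in its hexagon: \bar v_i = v_{i+3} *)
Definition vbar (v : V) : V := iter 3 (@prot K) v.

(* the hexagon (vertex set of the blue 6-cycle) containing v *)
Definition hex_of (v : V) : {set V} := [set iter (nat_of_ord k) (@prot K) v | k : 'I_6].
Definition is_hexagon (h : {set V}) : bool := [exists v, h == hex_of v].

Definition is_pseudohex : Prop :=
  (* bipartite (hence no loops) *)
  (forall e : E, pside (end1 e) != pside (end2 e)) /\
  (* (i) blue edges form vertex-disjoint 6-cycles covering V *)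
  (forall v : V, iter 6 (@prot K) v = v /\
     forall k, 0 < k < 6 -> iter k (@prot K) v != v) /\
  (forall e : E, blue e -> exists v : V, joins e v (prot v)) /\
  (forall v : V, #|[set e : E | blue e && joins e v (prot v)]| = 1) /\
  (forall x : V, exists e : E, red e && joins e x (vbar x)) /\
  (forall v : V, #|[set e : E | white e && incident e v]| = 1).

Definition real (e : E) : bool :=
  let x := end1 e in let y := end2 e in
  [&& white e,
      [exists f : E, white f && joins f (vbar x) (vbar y)] &
      [forall r : E, red r ==>
         ((incident r x || incident r y || incident r (vbar x) || incident r (vbar y))
          ==> (joins r x (vbar x) || joins r y (vbar y)))]].
Definition derived (e : E) : bool := white e && ~~ real e.

Definition is_end (e : E) : Prop :=
  red e /\ exists f : E, white f && joins f (end1 e) (end2 e).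

Definition hexT : finType := {h : {set V} | is_hexagon h}.

Definition GK_adj : rel hexT := fun h1 h2 =>
  (h1 != h2) &&
  [exists e : E, real e &&
     (((end1 e \in val h1) && (end2 e \in val h2)) ||
      ((end1 e \in val h2) && (end2 e \in val h1)))].

(* G^K has no cycle of length 2: two pairs {e, \bar e} of real white edges
   joining the same two distinct hexagons coincide. *)
Definition GK_no_2cycle : Prop :=
  forall e f : E, real e -> real f ->
    hex_of (end1 e) != hex_of (end2 e) ->
    (((hex_of (end1 f) == hex_of (end1 e)) && (hex_of (end2 f) == hex_of (end2 e))) ||
     ((hex_of (end1 f) == hex_of (end2 e)) && (hex_of (end2 f) == hex_of (end1 e)))) ->
    joins f (end1 e) (end2 e) || joins f (vbar (end1 e)) (vbar (end2 e)).

End PH.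

Definition connected_in (T : finType) (adj : rel T) (A : {set T}) : Prop :=
  forall x y, x \in A -> y \in A ->
    connect [rel u w | [&& adj u w, u \in A & w \in A]] x y.

Definition two_connected (T : finType) (adj : rel T) : Prop :=
  2 < #|T| /\ connected_in adj [set: T] /\
  forall v : T, connected_in adj (setT :\ v).

Definition proper_pseudohex (K : phex) : Prop :=
  (forall e : pE K, ~ is_end e) /\ two_connected (@GK_adj K) /\ GK_no_2cycle K.

(* The fork F: vertices 0 = x, 1 = y, 2 = z, 3 = a, 4 = b,
   edges zx, zy, za, ab. *)
Definition fork_adj (p q : 'I_5) : bool :=
  (nat_of_ord p, nat_of_ord q) \in
    [:: (2, 0); (0, 2); (2, 1); (1, 2); (2, 3); (3, 2); (3, 4); (4, 3)].

Definition deg (T : finType) (adj : rel T) (v : T) : nat := #|[set w | adj v w]|.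

(* adjacency of the graph obtained from (T', adj') by adding the bold fork,
   with the half-edges at x, y, b attached to g1, g2, g3 respectively *)
Definition fork_attach (T' : finType) (g1 g2 g3 : T') (p : 'I_5) (u : T') : bool :=
  [|| (nat_of_ord p == 0) && (u == g1),
      (nat_of_ord p == 1) && (u == g2) |
      (nat_of_ord p == 4) && (u == g3)].

Definition fork_sum_adj (T' : finType) (adj' : rel T') (g1 g2 g3 : T')
    (u v : T' + 'I_5) : bool :=
  match u, v with
  | inl a, inl b => adj' a b
  | inr p, inr q => fork_adj p q
  | inl a, inr p => fork_attach g1 g2 g3 p a
  | inr p, inl a => fork_attach g1 g2 g3 p a
  end.

Definition bold_fork_addition (T' T : finType) (adj' : rel T') (adj : rel T)
    (phi : T' + 'I_5 -> T) (g1 g2 g3 : T') : Prop :=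
  bijective phi /\ uniq [:: g1; g2; g3] /\
  deg adj' g1 = 2 /\ deg adj' g2 = 2 /\ deg adj' g3 = 2 /\
  forall u v, adj (phi u) (phi v) = fork_sum_adj adj' g1 g2 g3 u v.

Definition F_addition (K K' : phex) (phi : hexT K' + 'I_5 -> hexT K)
    (g1 g2 g3 : hexT K') : Prop :=
  bold_fork_addition (@GK_adj K') (@GK_adj K) phi g1 g2 g3.

Definition F_K (K K' : phex) (phi : hexT K' + 'I_5 -> hexT K) : {set hexT K} :=
  [set phi (inr p) | p : 'I_5].

Definition vset_of (K : phex) (H : {set hexT K}) : {set pV K} :=
  [set v | [exists h in H, v \in val h]].

Definition no_edge (K : phex) (VF : {set pV K}) (e : pE K) : bool :=
  derived e && ((end1 e \in VF) || (end2 e \in VF)).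

(* N is the union of the chosen
   perfect matchings N_h of the blue 6-cycles h in H: a set of blue edges
   inside V(H) covering each vertex of V(H) exactly once. The contracted
   paths/cycles are the components of the subgraph formed by N and all
   white edges with an endpoint in V(H); two edges lie in the same component
   iff they are linked by a chain of edges of that subgraph, consecutive ones
   sharing a vertex. *)
Definition contracted_edges (K : phex) (VH : {set pV K}) (N : {set pE K}) : {set pE K} :=
  N :|: [set e | white e && ((end1 e \in VH) || (end2 e \in VH))].

Definition share_vertex (K : phex) (e f : pE K) : bool :=
  incident e (end1 f) || incident e (end2 f).

Definition safe_reduction (K : phex) (H : {set hexT K}) (N : {set pE K}) : Prop :=
  let VH := vset_of H in
  let S := contracted_edges VH N in
  (forall e, e \in N -> [&& blue e, end1 e \in VH & end2 e \in VH]) /\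
  (forall v, v \in VH -> #|[set e in N | incident e v]| = 1) /\
  (forall e f, e \in S -> f \in S -> derived e -> derived f ->
     connect [rel g1 g2 | [&& g1 \in S, g2 \in S & share_vertex g1 g2]] e f ->
     e = f).

Definition safely_reducible (K : phex) (H : {set hexT K}) : Prop :=
  exists N : {set pE K}, safe_reduction H N.

(* Main.v *)
Require Import Defs.
From mathcomp Require Import all_boot.
Set Implicit Arguments. Unset Strict Implicit. Unset Printing Implicit Defensive.

Definition posn := (nat * nat)%type.
Definition peq (u v : posn) := (u.1 == v.1) && (u.2 == v.2).
Lemma peqE u v : peq u v = (u == v).
Proof. by case: u v => [a b] [c d]; rewrite /peq xpair_eqE. Qed.

Record prm := Prm { jy : nat; ja : nat; jb : nat; ex : nat; ey : nat; eb : nat;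
  sx : bool; sy : bool; sz : bool; sa : bool; sb : bool; sg : nat -> nat }.

Definition sof (p : prm) (k : nat) : bool :=
  match k with 0 => sx p | 1 => sy p | 2 => sz p | 3 => sa p | _ => sb p end.
Definition side (p : prm) (u : posn) : bool := sof p u.1 (+) odd u.2.

Definition LH (t : nat) : nat := match t with 0 => 0 | 1 => 1 | 2 => 3 | _ => 4 end.
Definition lres (p : prm) (k : nat) : nat :=
  match k with 0 => 3 - ex p %% 3 | 1 => 3 - ey p %% 3 | 3 => 3 - jb p %% 3 | _ => 3 - eb p %% 3 end.
Definition Lv (p : prm) (k : nat) (b : bool) : posn :=
  if side p (k, lres p k) == b then (k, lres p k) else (k, lres p k + 3).

Definition realE (p : prm) : seq (posn * posn) :=
  [:: ((0,0),(2,0)); ((0,3),(2,3)); ((1,0),(2,jy p)); ((1,3),(2,(jy p + 3) %% 6));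
      ((3,0),(2,ja p)); ((3,3),(2,(ja p + 3) %% 6)); ((4,0),(3,jb p)); ((4,3),(3,(jb p + 3) %% 6))].
Definition derE (p : prm) : seq (posn * posn) :=
  [seq (Lv p (LH t) false, Lv p (LH (sg p t)) true) | t <- iota 0 4].
Definition medges (p : prm) := realE p ++ derE p.
Definition exits (p : prm) : seq posn :=
  [:: (0, ex p); (0, ex p + 3); (1, ey p); (1, ey p + 3); (4, eb p); (4, eb p + 3)].
Definition realends (p : prm) : seq posn := flatten [seq [:: e.1; e.2] | e <- realE p].
Definition lefts (p : prm) : seq posn :=
  flatten [seq [:: Lv p (LH t) true; Lv p (LH t) false] | t <- iota 0 4].

Fixpoint lookw (l : seq (posn * posn)) (u : posn) : option posn :=
  match l with
  | [::] => None
  | (a, b) :: l' => if peq a u then Some b else if peq b u then Some a else lookw l' u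
  end.

Definition npart (bits : nat -> bool) (u : posn) : posn :=
  (u.1, if bits u.1 then (if odd u.2 then (u.2 + 1) %% 6 else (u.2 + 5) %% 6)
        else (if odd u.2 then u.2 - 1 else u.2 + 1)).

Definition allpos : seq posn := flatten [seq [seq (k, i) | i <- iota 0 6] | k <- iota 0 5].

Fixpoint walk (l : seq (posn*posn)) (bits : nat -> bool) (n : nat) (u0 u : posn) : seq posn :=
  match n with 0 => [::] | n'.+1 =>
    let v := npart bits u in
    match lookw l v with None => [:: v] | Some w => if peq w u0 then [:: v] else v :: w :: walk l bits n' u0 w end end.

Definition pidx (u : posn) := 6 * u.1 + u.2.
Definition labtab (p : prm) (bits : nat -> bool) : seq nat :=
  let l := medges p in
  foldl (fun tab t =>
     foldl (fun tab u => set_nth 0 tab (pidx u) t) tab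
       (Lv p (LH t) false :: walk l bits 20 (Lv p (LH t) false) (Lv p (LH t) false) ++
        Lv p (LH (sg p t)) true :: walk l bits 20 (Lv p (LH (sg p t)) true) (Lv p (LH (sg p t)) true)))
    (nseq 30 100) (iota 0 4).
Definition labf (p : prm) (bits : nat -> bool) : posn -> nat :=
  let tab := labtab p bits in fun u => nth 0 tab (pidx u).

Definition goodb (p : prm) (bits : nat -> bool) : bool :=
  let lab := labf p bits in
  all (fun e => lab e.1 == lab e.2) (medges p) &&
  all (fun u => lab u == lab (npart bits u)) allpos &&
  all (fun t => all (fun t' => (t == t') || (lab (Lv p (LH t) false) != lab (Lv p (LH t') false))) (iota 0 4)) (iota 0 4).

Definition structb (p : prm) : bool :=
  all (fun u => (u \in realends p) || (u \in exits p) || (u \in lefts p)) allpos &&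
  all (fun u => (u \notin realends p) && (u \notin exits p)) (lefts p) &&
  all (fun u => u \in allpos) (realends p ++ exits p ++ lefts p) &&
  all (fun t => [&& side p (Lv p (LH t) true), ~~ side p (Lv p (LH t) false),
     (Lv p (LH t) true).1 == LH t, (Lv p (LH t) false).1 == LH t &
     (Lv p (LH t) true).2 == ((Lv p (LH t) false).2 + 3) %% 6]) (iota 0 4).

Definition bitsof (n : nat) : nat -> bool := fun k => odd (n %/ (2 ^ k)).
Definition sgof (a b c d : nat) : nat -> nat := fun t => match t with 0 => a | 1 => b | 2 => c | _ => d end.

Definition mkp (jy ja jb ex ey eb : nat) (sx : bool) (a b c d : nat) : prm :=
  let sz := ~~ sx in
  let sy := ~~ (sz (+) odd jy) in
  let sa := ~~ (sz (+) odd ja) in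
  let sb := ~~ (sa (+) odd jb) in
  Prm jy ja jb ex ey eb sx sy sz sa sb (sgof a b c d).

Definition hints := [:: 2; 14; 8; 4; 10; 6; 16; 0].
Fixpoint hasg (p : prm) (l : seq nat) : bool :=
  match l with [::] => false | n :: l' => if goodb p (bitsof n) then true else hasg p l' end.
Definition onecase (p : prm) : bool := if structb p then hasg p hints else false.
Definition dvalid (a b c d : nat) := uniq [:: a; b; c; d] && (a != 0) && (b != 1) && (c != 2) && (d != 3).
Definition L2 := [:: 1; 2].
Definition I6 := iota 0 6.
Definition I4 := iota 0 4.

Definition check_all : bool :=
  all (fun jy => if jy %% 3 == 0 then true else all (fun ja => if (ja %% 3 == 0) || (ja %% 3 == jy %% 3) then true else
   all (fun jb => if jb %% 3 == 0 then true else all (fun ex => all (fun ey => all (fun eb =>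
   all (fun sx => all (fun a => all (fun b => all (fun c => all (fun d =>
     if dvalid a b c d then onecase (mkp jy ja jb ex ey eb sx a b c d) else true) I4) I4) I4) I4)
   [:: true; false]) L2) L2) L2) I6) I6) I6.

Lemma check_all_true : check_all.
Proof. vm_compute. reflexivity. Qed.

Lemma hasgP p l : hasg p l -> exists2 n, n \in l & goodb p (bitsof n).
Proof.
elim: l => [|n l IH] //=; case: ifP => [g _|_ /IH [m hm gm]].
  by exists n; rewrite ?inE ?eqxx.
by exists m; rewrite // inE hm orbT.
Qed.

Lemma check_use jy ja jb ex ey eb sx a b c d :
  jy < 6 -> jy %% 3 != 0 -> ja < 6 -> ja %% 3 != 0 -> ja %% 3 != jy %% 3 ->
  jb < 6 -> jb %% 3 != 0 -> ex \in L2 -> ey \in L2 -> eb \in L2 ->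
  a < 4 -> b < 4 -> c < 4 -> d < 4 -> dvalid a b c d ->
  structb (mkp jy ja jb ex ey eb sx a b c d) /\
  exists2 n, n \in hints & goodb (mkp jy ja jb ex ey eb sx a b c d) (bitsof n).
Proof.
move=> hjy hjy3 hja hja3 hjay hjb hjb3 hex hey heb ha hb hc hd hv.
have := check_all_true; rewrite /check_all => /allP /(_ jy).
rewrite mem_iota add0n hjy (negbTE hjy3) => /(_ isT) /allP /(_ ja).
rewrite mem_iota add0n hja (negbTE hja3) (negbTE hjay) => /(_ isT) /allP /(_ jb).
rewrite mem_iota add0n hjb (negbTE hjb3) => /(_ isT) /allP /(_ ex hex) /allP /(_ ey hey)
  /allP /(_ eb heb) /allP /(_ sx).
rewrite inE; case: sx => /(_ isT) /allP /(_ a) ; rewrite mem_iota ha => /(_ isT) /allP /(_ b);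
  rewrite mem_iota hb => /(_ isT) /allP /(_ c); rewrite mem_iota hc => /(_ isT) /allP /(_ d);
  rewrite mem_iota hd hv => /(_ isT); rewrite /onecase; case: ifP => // hs /hasgP; by split.
Qed.

Lemma good_edge p bits x y : goodb p bits -> (x, y) \in medges p -> labf p bits x = labf p bits y.
Proof. by case/andP => /andP [/allP H _] _ /H /eqP. Qed.

Lemma good_np p bits u : goodb p bits -> u \in allpos -> labf p bits u = labf p bits (npart bits u).
Proof. by case/andP => /andP [_ /allP H] _ /H /eqP. Qed.

Lemma good_der p bits t t' : goodb p bits -> t < 4 -> t' < 4 ->
  labf p bits (Lv p (LH t) false) = labf p bits (Lv p (LH t') false) -> t = t'.
Proof.
case/andP => _ /allP H ht ht' E.
have := H t; rewrite mem_iota ht => /(_ isT) /allP /(_ t'); rewrite mem_iota ht' => /(_ isT).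
by rewrite E eqxx orbF => /eqP.
Qed.

Lemma struct_cover p u : structb p -> u \in allpos ->
  [\/ u \in realends p, u \in exits p | u \in lefts p].
Proof.
case/andP => /andP [/andP [/allP H _] _] _ /H.
by case/orP => [/orP [] h|h]; [apply: Or31|apply: Or32|apply: Or33].
Qed.

Lemma struct_lefts p u : structb p -> u \in lefts p -> (u \notin realends p) && (u \notin exits p).
Proof. by case/andP => /andP [/andP [_ /allP H] _] _ /H. Qed.

Lemma struct_bound p u : structb p -> u \in realends p ++ exits p ++ lefts p -> u \in allpos.
Proof. by case/andP => /andP [_ /allP H] _ /H. Qed.

Lemma struct_Lv p t : structb p -> t < 4 ->
  [/\ side p (Lv p (LH t) true), ~~ side p (Lv p (LH t) false),
     (Lv p (LH t) true).1 = LH t, (Lv p (LH t) false).1 = LH t &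
     (Lv p (LH t) true).2 = ((Lv p (LH t) false).2 + 3) %% 6].
Proof.
case/andP => _ /allP H ht; have := H t; rewrite mem_iota ht => /(_ isT).
by case/and5P => ? ? /eqP ? /eqP ? /eqP ?.
Qed.

Lemma mem_allpos u : (u \in allpos) = (u.1 < 5) && (u.2 < 6).
Proof.
case: u => k i /=.
apply/idP/idP.
  by rewrite /allpos => /flattenP [s /mapP [k' hk' ->]] /mapP [i' hi' [-> ->]];
     move: hk' hi'; rewrite !mem_iota /= => -> ->.
case/andP => hk hi; apply/flattenP; exists [seq (k, i) | i <- iota 0 6].
  by apply/mapP; exists k; rewrite // mem_iota.
by apply/mapP; exists i; rewrite // mem_iota.
Qed.

Definition np_ok (bits : nat -> bool) : bool :=
  all (fun u => [&& npart bits u \in allpos, npart bits (npart bits u) == u,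
                   (npart bits u).1 == u.1,
                   ((npart bits u).2 == (u.2 + 1) %% 6) || (u.2 == ((npart bits u).2 + 1) %% 6) &
                   ~~ (((npart bits u).2 == (u.2 + 1) %% 6) && (u.2 == ((npart bits u).2 + 1) %% 6))]) allpos.

Lemma np_ok_hints : all (fun n => np_ok (bitsof n)) hints.
Proof. vm_compute. reflexivity. Qed.

Lemma np_facts n u : n \in hints -> u \in allpos ->
  [/\ npart (bitsof n) u \in allpos, npart (bitsof n) (npart (bitsof n) u) = u,
      (npart (bitsof n) u).1 = u.1,
      ((npart (bitsof n) u).2 = (u.2 + 1) %% 6) \/ (u.2 = ((npart (bitsof n) u).2 + 1) %% 6) &
      ~ (((npart (bitsof n) u).2 = (u.2 + 1) %% 6) /\ (u.2 = ((npart (bitsof n) u).2 + 1) %% 6))].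
Proof.
move=> hn hu; move: np_ok_hints => /allP /(_ n hn) /allP /(_ u hu) /and5P [h1 /eqP h2 /eqP h3 h4 h5].
split=> //.
  by case/orP: h4 => /eqP h; [left|right].
by move=> [E1 E2]; move: h5; rewrite -{1}E1 -{1}E2 !eqxx.
Qed.

Lemma lookw_mem l u w : lookw l u = Some w -> ((u, w) \in l) || ((w, u) \in l).
Proof.
elim: l => [|[a b] l IH] //=.
rewrite !peqE; case: eqP => [-> [<-]|_]; first by rewrite inE eqxx.
case: eqP => [-> [<-]|_]; first by rewrite !inE eqxx orbT.
by move/IH; rewrite !inE => /orP [] ->; rewrite ?orbT.
Qed.

Section Gen.
Variable K : phex.
Hypothesis HK : is_pseudohex K.
Local Notation V := (pV K).
Local Notation E := (pE K).
Local Notation pr := (@prot K).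

Lemma bip (e : E) : pside (end1 e) != pside (end2 e).
Proof. by case: HK => H _; apply: H. Qed.

Lemma iter6 (v : V) : iter 6 pr v = v.
Proof. by case: HK => _ [H _]; case: (H v). Qed.

Lemma iterk_neq (v : V) k : 0 < k < 6 -> iter k pr v != v.
Proof. by case: HK => _ [H _]; case: (H v) => _; apply. Qed.

Lemma iterD i j (v : V) : iter (i + j) pr v = iter i pr (iter j pr v).
Proof. by rewrite iterD. Qed.

Lemma iter_mod i (v : V) : iter i pr v = iter (i %% 6) pr v.
Proof.
have H : forall n (w : V), iter (n * 6) pr w = w.
  by elim=> [|n IH] w; [ | rewrite mulSn iterD iter6 IH].
by rewrite {1}(divn_eq i 6) addnC iterD H.
Qed.

Lemma iter_inj i j (v : V) : i < 6 -> j < 6 -> iter i pr v = iter j pr v -> i = j.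
Proof.
wlog lij : i j / i <= j => [W|] hi hj E1.
  by case: (leqP i j) => h; [apply: W | apply/esym; apply: W => //; apply: ltnW].
case: (ltngtP i j) lij => // lt _.
have H := iterk_neq (iter i pr v) (k := j - i).
have H2 : 0 < j - i < 6.
  by rewrite subn_gt0 lt /= (leq_ltn_trans (leq_subr _ _) hj).
move: (H H2); rewrite -iterD subnK; last exact: ltnW.
by rewrite E1 eqxx.
Qed.

Lemma prot_inj : injective pr.
Proof.
move=> u w h.
by rewrite -(iter6 u) -(iter6 w) !iterSr /= h.
Qed.

Lemma vbarE (v : V) : vbar v = iter 3 pr v.
Proof. by []. Qed.

Lemma vbarK (v : V) : vbar (vbar v) = v.
Proof. by rewrite /vbar -iterD iter6. Qed.

Lemma mem_hex (v w : V) : (w \in hex_of v) = [exists k : 'I_6, w == iter k pr v].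
Proof.
apply/imsetP/existsP => [[k _ ->]|[k /eqP ->]]; first by exists k.
by exists k.
Qed.

Lemma hexP (v w : V) : reflect (exists2 k, k < 6 & w = iter k pr v) (w \in hex_of v).
Proof.
rewrite mem_hex; apply: (iffP existsP) => [[k /eqP ->]|[k hk ->]].
  by exists k.
by exists (Ordinal hk).
Qed.

Lemma hex_self (v : V) : v \in hex_of v.
Proof. by apply/hexP; exists 0. Qed.

Lemma hex_iter (v : V) i : iter i pr v \in hex_of v.
Proof. by apply/hexP; exists (i %% 6); rewrite ?ltn_pmod // -iter_mod. Qed.

Lemma hex_same (v w : V) : w \in hex_of v -> hex_of w = hex_of v.
Proof.
move=> /hexP [k hk ->]; apply/setP => u; apply/hexP/hexP => [[j hj ->]|[j hj ->]].
  by exists ((j + k) %% 6); rewrite ?ltn_pmod // -iter_mod iterD.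
exists ((j + (6 - k)) %% 6); first by rewrite ltn_pmod.
by rewrite -iter_mod -iterD -addnA subnK ?(ltnW hk) // iterD iter6.
Qed.

Lemma hex_vbar (v : V) : vbar v \in hex_of v.
Proof. exact: hex_iter. Qed.

Lemma hexT_val (h : hexT K) (v : V) : v \in val h -> val h = hex_of v.
Proof.
case: h => h /= /existsP [b /eqP ->] hv.
by rewrite (hex_same hv).
Qed.

Lemma side_prot (v : V) : pside (pr v) = ~~ pside v.
Proof.
case: HK => _ [_ [_ [H _]]].
have : #|[set e : E | blue e && joins e v (pr v)]| > 0 by rewrite H.
case/card_gt0P => e; rewrite inE => /andP [_ J].
have := bip e.
case/orP: J => /andP [/eqP -> /eqP ->]; first by case: (pside v); case: (pside (pr v)).
by case: (pside v); case: (pside (pr v)).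
Qed.

Lemma side_iter i (v : V) : pside (iter i pr v) = pside v (+) odd i.
Proof.
elim: i => [|i IH] /=; first by rewrite addbF.
by rewrite side_prot IH; case: (pside v); case: (odd i).
Qed.

Lemma blue_uniq (v : V) (e f : E) : blue e -> joins e v (pr v) -> blue f -> joins f v (pr v) -> e = f.
Proof.
case: HK => _ [_ [_ [H _]]] be je bf jf.
have /eqP /cards1P [g Hg] := H v.
have : e \in [set e : E | blue e && joins e v (pr v)] by rewrite inE be je.
have : f \in [set e : E | blue e && joins e v (pr v)] by rewrite inE bf jf.
by rewrite Hg !inE => /eqP -> /eqP ->.
Qed.

Lemma blue_ex (v : V) : exists2 e : E, blue e & joins e v (pr v).
Proof.
case: HK => _ [_ [_ [H _]]].
have : #|[set e : E | blue e && joins e v (pr v)]| > 0 by rewrite H.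
by case/card_gt0P => e; rewrite inE => /andP [? ?]; exists e.
Qed.

Lemma blue_form (e : E) : blue e -> exists v : V, joins e v (pr v).
Proof. by case: HK => _ [_ [H _]]; apply: H. Qed.

Lemma white_uniq (v : V) (e f : E) : white e -> incident e v -> white f -> incident f v -> e = f.
Proof.
case: HK => _ [_ [_ [_ [_ H]]]] we ie wf if_.
have /eqP /cards1P [g Hg] := H v.
have : e \in [set e : E | white e && incident e v] by rewrite inE we ie.
have : f \in [set e : E | white e && incident e v] by rewrite inE wf if_.
by rewrite Hg !inE => /eqP -> /eqP ->.
Qed.

Lemma white_ex (v : V) : exists2 e : E, white e & incident e v.
Proof.
case: HK => _ [_ [_ [_ [_ H]]]].
have : #|[set e : E | white e && incident e v]| > 0 by rewrite H.
by case/card_gt0P => e; rewrite inE => /andP [? ?]; exists e.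
Qed.

Lemma red_bar (v : V) : exists2 e : E, red e & joins e v (vbar v).
Proof.
case: HK => _ [_ [_ [_ [H _]]]].
by case: (H v) => e /andP [? ?]; exists e.
Qed.

Lemma joinsC (e : E) u w : joins e u w = joins e w u.
Proof. by rewrite /joins orbC. Qed.

Lemma joins_inc1 (e : E) u w : joins e u w -> incident e u.
Proof. by rewrite /joins /incident => /orP [] /andP [E1 E2]; rewrite ?E1 ?E2 ?orbT. Qed.

Lemma joins_inc2 (e : E) u w : joins e u w -> incident e w.
Proof. by rewrite joinsC; apply: joins_inc1. Qed.

Lemma joins_inc (e : E) u w x : joins e u w -> incident e x -> x = u \/ x = w.
Proof.
rewrite /joins /incident => /orP [] /andP [/eqP E1 /eqP E2] /orP [] /eqP E3; subst; auto.
Qed.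

Lemma joins_neq (e : E) u w : joins e u w -> u != w.
Proof.
have := bip e.
rewrite /joins => H /orP [] /andP [/eqP E1 /eqP E2]; subst; apply/eqP => E3; subst;
by move: H; rewrite E3 eqxx.
Qed.

Lemma joins_ends (e : E) : joins e (end1 e) (end2 e).
Proof. by rewrite /joins !eqxx. Qed.

Lemma inc_other (e : E) v : incident e v -> exists w, joins e v w.
Proof.
rewrite /incident => /orP [] /eqP <-; first by exists (end2 e); apply: joins_ends.
by exists (end1 e); rewrite joinsC joins_ends.
Qed.

Lemma joins_eq (e : E) u w u' w' : joins e u w -> joins e u' w' ->
  (u' = u /\ w' = w) \/ (u' = w /\ w' = u).
Proof.
by rewrite /joins => /orP [] /andP [/eqP <- /eqP <-] /orP [] /andP [/eqP <- /eqP <-]; auto.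
Qed.

Lemma joins_eq1 (e : E) u w w' : joins e u w -> joins e u w' -> w' = w.
Proof.
move=> J1 J2; case: (joins_eq J1 J2) => [[_ ->]//|[E1 E2]].
by subst; move: (joins_neq J1); rewrite eqxx.
Qed.

Hypothesis Hnoend : forall e : E, ~ is_end e.

Lemma no_white_bar (e : E) v : white e -> joins e v (vbar v) -> False.
Proof.
move=> we J; case: (red_bar v) => r rr Jr.
apply: (Hnoend (e := r)); split => //; exists e; rewrite we /=.
case: (joins_eq Jr (joins_ends r)) => [[-> ->]|[-> ->]] //.
by rewrite joinsC.
Qed.

End Gen.

Section Core.
Variable K : phex.
Hypothesis HK : is_pseudohex K.
Hypothesis Hnoend : forall e : pE K, ~ is_end e.
Local Notation V := (pV K).
Local Notation E := (pE K).
Local Notation pr := (@prot K).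

Variable bk : nat -> V.
Definition pos (u : posn) : V := iter u.2 pr (bk u.1).
Variable VF : {set V}.
Hypothesis VFP : forall v, v \in VF <-> exists2 u, u \in allpos & v = pos u.
Hypothesis pos_inj : forall u u', u \in allpos -> u' \in allpos -> pos u = pos u' -> u = u'.

Definition W (x y : posn) := exists2 e : E, white e & joins e (pos x) (pos y).
Definition RW (x y : posn) := exists2 e : E, real e & joins e (pos x) (pos y).

Variables jy ja jb ex' ey' eb' : nat.
Hypotheses (hjy : jy < 6) (hja : ja < 6) (hjb : jb < 6) (hex : ex' < 6) (hey : ey' < 6) (heb : eb' < 6).
Hypothesis HW1 : RW (0,0) (2,0).
Hypothesis HW2 : RW (0,3) (2,3).
Hypothesis HW3 : RW (1,0) (2,jy).
Hypothesis HW4 : RW (1,3) (2,(jy + 3) %% 6).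
Hypothesis HW5 : RW (3,0) (2,ja).
Hypothesis HW6 : RW (3,3) (2,(ja + 3) %% 6).
Hypothesis HW7 : RW (4,0) (3,jb).
Hypothesis HW8 : RW (4,3) (3,(jb + 3) %% 6).

Definition isexit (u : posn) : bool :=
  [|| (u.1 == 0) && (u.2 %% 3 == ex' %% 3), (u.1 == 1) && (u.2 %% 3 == ey' %% 3) |
      (u.1 == 4) && (u.2 %% 3 == eb' %% 3)].
Definition Xout (u : posn) := exists2 e : E, white e &
  exists2 w, joins e (pos u) w & w \notin VF.
Hypothesis HX : forall u, u \in allpos -> isexit u -> Xout u.
Hypothesis Hout : forall u (e : E) w, u \in allpos -> white e -> joins e (pos u) w -> w \notin VF -> isexit u.
Hypothesis HnoF : forall e : E, derived e -> (end1 e \in VF) || (end2 e \in VF) ->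
   (end1 e \in VF) && (end2 e \in VF).

Lemma pos_VF u : u \in allpos -> pos u \in VF.
Proof. by move=> hu; apply/VFP; exists u. Qed.

Lemma W_sym x y : W x y -> W y x.
Proof. by case=> e we J; exists e; rewrite // joinsC. Qed.

Lemma W_conf x y z : x \in allpos -> y \in allpos -> z \in allpos -> W x y -> W x z -> y = z.
Proof.
move=> hx hy hz [e we Je] [f wf Jf].
have ef := white_uniq HK we (joins_inc1 Je) wf (joins_inc1 Jf); subst f.
apply: (pos_inj hy hz); apply/esym; exact: (joins_eq1 HK Je Jf).
Qed.

Lemma W_conf' x y z : W x y -> W x z -> x \in allpos -> y \in allpos -> z \in allpos -> y = z.
Proof. by move=> A B hx hy hz; apply: W_conf A B. Qed.

Lemma W_X x y : x \in allpos -> y \in allpos -> W x y -> Xout x -> False.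
Proof.
move=> hx hy [e we Je] [f wf [w Jf hw]].
have ef := white_uniq HK we (joins_inc1 Je) wf (joins_inc1 Jf); subst f.
by move: hw; rewrite (joins_eq1 HK Je Jf) pos_VF.
Qed.

Lemma W_X' x y : W x y -> Xout x -> x \in allpos -> y \in allpos -> False.
Proof. by move=> A B hx hy; apply: W_X A B. Qed.

Lemma side_pos u : pside (pos u) = pside (bk u.1) (+) odd u.2.
Proof. exact: side_iter. Qed.

Lemma W_side x y : W x y -> pside (pos x) != pside (pos y).
Proof.
case=> e _ J; have := bip HK e.
by case/orP: J => /andP [/eqP -> /eqP ->] //; rewrite eq_sym.
Qed.

Lemma pos_mod k i : pos (k, i) = pos (k, i %% 6).
Proof. by rewrite /pos /= iter_mod. Qed.

Lemma vbar_pos k i : vbar (pos (k, i)) = pos (k, (i + 3) %% 6).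
Proof. by rewrite -pos_mod /pos /= vbarE -iterD addnC. Qed.


Lemma RW_W x y : RW x y -> W x y.
Proof. by case=> e /andP [we _] J; exists e. Qed.

Lemma allpos_mk k i : k < 5 -> i < 6 -> (k, i) \in allpos.
Proof. by move=> hk hi; rewrite mem_allpos /= hk hi. Qed.

Ltac ap := apply: allpos_mk => //.

Lemma jy_ok : jy %% 3 != 0.
Proof.
apply/negP => h.
have W1 := W_sym (RW_W HW1); have W2 := W_sym (RW_W HW2); have W3 := W_sym (RW_W HW3).
have : jy = 0 \/ jy = 3 by move: h hjy; case: (jy) => [|[|[|[|[|[|]]]]]] //; auto.
case=> E1; rewrite E1 in W3.
  by have := W_conf' W1 W3 isT isT isT.
by have := W_conf' W2 W3 isT isT isT.
Qed.
Lemma mod3_cases a c : a < 6 -> c < 6 -> a %% 3 = c %% 3 -> a = c \/ a = (c + 3) %% 6.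
Proof. by move: a c => [|[|[|[|[|[|a]]]]]] [|[|[|[|[|[|c]]]]]] //; auto. Qed.

Lemma bnd3 c : c < 6 -> (c + 3) %% 6 < 6.
Proof. by move=> _; rewrite ltn_pmod. Qed.

Lemma ja_ok : (ja %% 3 != 0) && (ja %% 3 != jy %% 3).
Proof.
have W1 := W_sym (RW_W HW1); have W2 := W_sym (RW_W HW2); have W3 := W_sym (RW_W HW3).
have W4 := W_sym (RW_W HW4); have W5 := W_sym (RW_W HW5).
apply/andP; split; apply/negP => /eqP h.
  case: (mod3_cases hja (isT : 0 < 6) h) => E1; rewrite E1 in W5.
    by have := W_conf' W1 W5 isT isT isT.
  by have := W_conf' W2 W5 isT isT isT.
case: (mod3_cases hja hjy h) => E1; rewrite E1 in W5.
  by have := W_conf' W3 W5 (allpos_mk (isT : 2 < 5) hjy) isT isT.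
by have := W_conf' W4 W5 (allpos_mk (isT : 2 < 5) (bnd3 hjy)) isT isT.
Qed.

Lemma jb_ok : jb %% 3 != 0.
Proof.
have W5 := RW_W HW5; have W6 := RW_W HW6; have W7 := W_sym (RW_W HW7).
apply/negP => /eqP h.
case: (mod3_cases hjb (isT : 0 < 6) h) => E1; rewrite E1 in W7.
  by have := W_conf' W5 W7 isT (allpos_mk (isT : 2 < 5) hja) isT.
by have := W_conf' W6 W7 isT (allpos_mk (isT : 2 < 5) (bnd3 hja)) isT.
Qed.

Lemma isexit_self k i : (k == 0) || (k == 1) || (k == 4) ->
  (k == 0) && (i %% 3 == ex' %% 3) || (k == 1) && (i %% 3 == ey' %% 3) || (k == 4) && (i %% 3 == eb' %% 3) ->
  isexit (k, i).
Proof. by rewrite /isexit /= => _ /orP [/orP [] | ] ->; rewrite ?orbT. Qed.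

Lemma ex_ok : (ex' %% 3 != 0) && (ey' %% 3 != 0) && (eb' %% 3 != 0).
Proof.
have X1 : Xout (0, ex') by apply: HX; [apply: allpos_mk | rewrite /isexit /= !eqxx ?orbT].
have X2 : Xout (1, ey') by apply: HX; [apply: allpos_mk | rewrite /isexit /= !eqxx ?orbT].
have X3 : Xout (4, eb') by apply: HX; [apply: allpos_mk | rewrite /isexit /= !eqxx ?orbT].
apply/andP; split; [apply/andP; split|]; apply/negP => /eqP h.
- case: (mod3_cases hex (isT : 0 < 6) h) => E1; rewrite E1 in X1.
    exact: (W_X' (RW_W HW1) X1 isT isT).
  exact: (W_X' (RW_W HW2) X1 isT isT).
- case: (mod3_cases hey (isT : 0 < 6) h) => E1; rewrite E1 in X2.
    exact: (W_X' (RW_W HW3) X2 isT (allpos_mk (isT : 2 < 5) hjy)).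
  exact: (W_X' (RW_W HW4) X2 isT (allpos_mk (isT : 2 < 5) (bnd3 hjy))).
- case: (mod3_cases heb (isT : 0 < 6) h) => E1; rewrite E1 in X3.
    exact: (W_X' (RW_W HW7) X3 isT (allpos_mk (isT : 3 < 5) hjb)).
  exact: (W_X' (RW_W HW8) X3 isT (allpos_mk (isT : 3 < 5) (bnd3 hjb))).
Qed.


Lemma neqb (x y : bool) : x != y -> x = ~~ y.
Proof. by case: x; case: y. Qed.

Definition s k := pside (bk k).
Definition exm := ex' %% 3.
Definition eym := ey' %% 3.
Definition ebm := eb' %% 3.
Definition pq a b c d := mkp jy ja jb exm eym ebm (s 0) a b c d.

Lemma sides_ok : [/\ s 2 = ~~ s 0, s 1 = ~~ (s 2 (+) odd jy), s 3 = ~~ (s 2 (+) odd ja) &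
   s 4 = ~~ (s 3 (+) odd jb)].
Proof.
have := W_side (RW_W HW1); have := W_side (RW_W HW3); have := W_side (RW_W HW5);
have := W_side (RW_W HW7); rewrite !side_pos /= !addbF => h7 h5 h3 h1.
rewrite /s; split.
- by move: h1; case: (pside (bk 2)); case: (pside (bk 0)).
- by move: h3; case: (pside (bk 1)); case: (pside (bk 2) (+) odd jy).
- by move: h5; case: (pside (bk 3)); case: (pside (bk 2) (+) odd ja).
- by move: h7; case: (pside (bk 4)); case: (pside (bk 3) (+) odd jb).
Qed.

Lemma sof_pq a b c d k : k < 5 -> sof (pq a b c d) k = s k.
Proof.
case: sides_ok => e2 e1 e3 e4.
rewrite /pq /mkp /sof /=; rewrite /s in e1 e2 e3 e4 *.
case: k => [|[|[|[|[|]]]]] //= _.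
- by rewrite e1 e2.
- by rewrite e3 e2.
- by rewrite e4 e3 e2.
Qed.

Lemma side_pq a b c d u : u \in allpos -> side (pq a b c d) u = pside (pos u).
Proof.
rewrite mem_allpos => /andP [hk _].
by rewrite /side sof_pq // side_pos.
Qed.

Lemma Lv_pq a b c d k b0 : Lv (pq a b c d) k b0 = Lv (pq 0 0 0 0) k b0.
Proof. by []. Qed.

Lemma structb_pq a b c d : structb (pq a b c d) = structb (pq 0 0 0 0).
Proof. by []. Qed.

Lemma exm_ok : (exm \in L2) && (eym \in L2) && (ebm \in L2).
Proof.
case/andP: ex_ok => /andP [h1 h2] h3.
rewrite /exm /eym /ebm /L2 !inE.
move: h1 h2 h3; case: (ex' %% 3) (ltn_pmod ex' (isT : 0 < 3)) => [|[|[|]]] //;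
case: (ey' %% 3) (ltn_pmod ey' (isT : 0 < 3)) => [|[|[|]]] //;
case: (eb' %% 3) (ltn_pmod eb' (isT : 0 < 3)) => [|[|[|]]] //.
Qed.

Lemma structb_ok : structb (pq 0 0 0 0).
Proof.
case/andP: ja_ok => h1 h2; case/andP: exm_ok => /andP [e1 e2] e3.
rewrite -(structb_pq 1 0 3 2).
by case: (check_use (s 0) hjy jy_ok hja h1 h2 hjb jb_ok e1 e2 e3 (isT : 1 < 4) (isT : 0 < 4) (isT : 3 < 4) (isT : 2 < 4) isT).
Qed.

Lemma realE_pq a b c d a' b' c' d' x : (x \in realE (pq a b c d)) = (x \in realE (pq a' b' c' d')).
Proof. by []. Qed.

Lemma realE_RW a b c d x y : (x, y) \in realE (pq a b c d) -> RW x y.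
Proof.
rewrite /realE /= !inE.
by do ![case/orP=> [/eqP [-> ->] //|]]; move/eqP => [-> ->].
Qed.

Lemma realends_inv a b c d u : u \in realends (pq a b c d) ->
  exists x y, (x, y) \in realE (pq a b c d) /\ (u = x \/ u = y).
Proof.
rewrite /realends => /flattenP [l /mapP [[x y] hxy ->]].
by rewrite !inE => /orP [] /eqP ->; exists x, y; auto.
Qed.

Lemma realends_mem a b c d x y : (x, y) \in realE (pq a b c d) ->
  (x \in realends (pq a b c d)) && (y \in realends (pq a b c d)).
Proof.
move=> h; rewrite /realends; apply/andP; split; apply/flattenP; exists [:: x; y];
  try (by apply/mapP; exists (x, y)); by rewrite !inE eqxx ?orbT.
Qed.

Lemma lefts_inv a b c d u : u \in lefts (pq a b c d) ->
  exists t b0, t < 4 /\ u = Lv (pq a b c d) (LH t) b0.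
Proof.
rewrite /lefts => /flattenP [l /mapP [t ht ->]].
rewrite mem_iota in ht.
by rewrite !inE => /orP [] /eqP ->; [exists t, true | exists t, false].
Qed.

Lemma lefts_mem a b c d t b0 : t < 4 -> Lv (pq a b c d) (LH t) b0 \in lefts (pq a b c d).
Proof.
move=> ht; rewrite /lefts; apply/flattenP; exists [:: Lv (pq a b c d) (LH t) true; Lv (pq a b c d) (LH t) false].
  by apply/mapP; exists t; rewrite // mem_iota.
by case: b0; rewrite !inE eqxx ?orbT.
Qed.

Lemma exm_small : (exm < 3) && (eym < 3) && (ebm < 3).
Proof. by rewrite /exm /eym /ebm !ltn_pmod. Qed.

Lemma isexit_exits a b c d u : u \in allpos -> isexit u -> u \in exits (pq a b c d).
Proof.
case: u => k i; rewrite mem_allpos /= => /andP [hk hi].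
case/andP: exm_small => /andP [s1 s2] s3.
rewrite /isexit /exits /= !inE => /orP [/andP [/eqP -> /eqP h]|/orP [] /andP [/eqP -> /eqP h]].
- rewrite -/exm -(modn_small s1) in h.
  have s1' : exm + 3 < 6 by rewrite -[6]/(3 + 3) ltn_add2r.
  case: (mod3_cases hi (ltn_trans s1 (isT : 3 < 6)) h) => ->; rewrite ?eqxx ?orbT //.
  by rewrite (modn_small s1') ?eqxx ?orbT.
- rewrite -/eym -(modn_small s2) in h.
  have s2' : eym + 3 < 6 by rewrite -[6]/(3 + 3) ltn_add2r.
  case: (mod3_cases hi (ltn_trans s2 (isT : 3 < 6)) h) => ->; rewrite ?eqxx ?orbT //.
  by rewrite (modn_small s2') ?eqxx ?orbT.
- rewrite -/ebm -(modn_small s3) in h.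
  have s3' : ebm + 3 < 6 by rewrite -[6]/(3 + 3) ltn_add2r.
  case: (mod3_cases hi (ltn_trans s3 (isT : 3 < 6)) h) => ->; rewrite ?eqxx ?orbT //.
  by rewrite (modn_small s3') ?eqxx ?orbT.
Qed.

Lemma exits_isexit a b c d u : u \in exits (pq a b c d) -> isexit u.
Proof.
rewrite /exits /isexit !inE /=.
by do ![case/orP=> [/eqP -> /=|]]; [..|move/eqP -> => /=];
  rewrite ?modnDr /exm /eym /ebm ?modn_mod ?eqxx ?orbT.
Qed.


Local Notation P0 := (pq 0 0 0 0).

Lemma Lv_facts t b : t < 4 ->
  [/\ Lv P0 (LH t) b \in lefts P0, Lv P0 (LH t) b \in allpos,
      Lv P0 (LH t) b \notin realends P0, Lv P0 (LH t) b \notin exits P0 &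
      pside (pos (Lv P0 (LH t) b)) = b].
Proof.
move=> ht; have hl := lefts_mem 0 0 0 0 b ht.
have ha : Lv P0 (LH t) b \in allpos.
  apply: (struct_bound structb_ok); rewrite mem_cat; apply/orP; right.
  by rewrite mem_cat; apply/orP; right; exact: hl.
have /andP [h1 h2] := struct_lefts structb_ok hl.
split=> //.
rewrite -(side_pq 0 0 0 0 ha).
by case: (struct_Lv (p := pq 0 0 0 0) structb_ok ht) => A B _ _ _; case: b {hl ha h1 h2}; [|apply/negbTE].
Qed.

Lemma Lv_anti t : t < 4 -> pos (Lv P0 (LH t) true) = vbar (pos (Lv P0 (LH t) false)).
Proof.
move=> ht; case: (struct_Lv structb_ok ht) => _ _ A B C.
case: (Lv P0 (LH t) true) A C => k i /= -> ->.
case: (Lv P0 (LH t) false) B => k' i' /= ->.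
by rewrite vbar_pos.
Qed.

Lemma LH_inj t t' : t < 4 -> t' < 4 -> LH t = LH t' -> t = t'.
Proof. by move: t t' => [|[|[|[|t]]]] [|[|[|[|t']]]]. Qed.

Lemma Lv_inj t t' b b' : t < 4 -> t' < 4 -> Lv P0 (LH t) b = Lv P0 (LH t') b' -> t = t'.
Proof.
move=> ht ht' E1; apply: LH_inj => //.
case: (struct_Lv structb_ok ht) => _ _ A B _.
case: (struct_Lv structb_ok ht') => _ _ A' B' _.
by case: b E1 => E1; [rewrite -A | rewrite -B]; rewrite E1; case: b' {E1}.
Qed.

Lemma no_anti t b (f : E) : t < 4 -> white f ->
  joins f (pos (Lv P0 (LH t) b)) (pos (Lv P0 (LH t) (~~ b))) -> False.
Proof.
move=> ht wf; case: b => /= Jf.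
  rewrite Lv_anti // joinsC in Jf.
  exact: (no_white_bar HK Hnoend wf Jf).
by rewrite Lv_anti // in Jf; apply: (no_white_bar HK Hnoend wf Jf).
Qed.

Lemma left_partner t b : t < 4 ->
  exists t', [/\ t' < 4, t' != t & W (Lv P0 (LH t) b) (Lv P0 (LH t') (~~ b))].
Proof.
move=> ht; case: (Lv_facts b ht) => hul hua hnr hne hs.
set u := Lv P0 (LH t) b in hul hua hnr hne hs *.
case: (white_ex HK (pos u)) => e we ie; case: (inc_other ie) => w J.
case hw: (w \in VF); last first.
  have := Hout hua we J (negbT hw) => /(isexit_exits 0 0 0 0 hua) hx.
  by rewrite hx in hne.
have /VFP [u' hu' Ew] := hw; subst w.
have Wuu' : W u u' by exists e.
case: (struct_cover structb_ok hu') => [hr|hx|hl].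
- case: (realends_inv hr) => x [y [hxy [Ex|Ey]]]; [subst x | subst y].
  + have Wxy := RW_W (realE_RW hxy).
    have hy : y \in allpos.
      by apply: (struct_bound structb_ok); rewrite mem_cat (proj2 (andP (realends_mem hxy))).
    have := W_conf' Wxy (W_sym Wuu') hu' hy hua => Eyu; rewrite Eyu in hxy.
    by rewrite (proj2 (andP (realends_mem hxy))) in hnr.
  + have Wxy := W_sym (RW_W (realE_RW hxy)).
    have hx : x \in allpos.
      by apply: (struct_bound structb_ok); rewrite mem_cat (proj1 (andP (realends_mem hxy))).
    have := W_conf' Wxy (W_sym Wuu') hu' hx hua => Exu; rewrite Exu in hxy.
    by rewrite (proj1 (andP (realends_mem hxy))) in hnr.
- have := HX hu' (exits_isexit hx) => Xo.
  by case: (W_X' (W_sym Wuu') Xo hu' hua).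
- case: (lefts_inv hl) => t' [b' [ht' Eu']]; subst u'.
  have hsd := W_side Wuu'.
  case: (Lv_facts b' ht') => _ _ _ _ hs'.
  rewrite hs hs' in hsd.
  have Eb : b' = ~~ b by rewrite (neqb hsd) negbK.
  subst b'.
  case: (eqVneq t' t) => [Et|Nt]; last by exists t'.
  subst t'; exfalso; case: Wuu' => f wf Jf.
  exact: (no_anti ht wf Jf).
Qed.


Definition sgP (t : nat) : option 'I_4 :=
  [pick t' : 'I_4 | (val t' != t) &&
     [exists e : E, white e && joins e (pos (Lv P0 (LH t) false)) (pos (Lv P0 (LH t') true))]].
Definition sig (t : nat) : nat := if sgP t is Some t' then val t' else 0.

Lemma sig_spec t : t < 4 ->
  [/\ sig t < 4, sig t != t & W (Lv P0 (LH t) false) (Lv P0 (LH (sig t)) true)].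
Proof.
move=> ht; rewrite /sig /sgP; case: pickP => [t' /andP [h1 /existsP [e /andP [we J]]]|H].
  by split; [exact: ltn_ord | exact: h1 | exists e].
exfalso; have [t' [ht' h1 h2]] := @left_partner t false ht.
case: h2 => e we J.
have := H (Ordinal ht'); rewrite /= h1 /=.
by move/negbT/existsPn/(_ e); rewrite we J.
Qed.

Lemma Lv_allpos t b : t < 4 -> Lv P0 (LH t) b \in allpos.
Proof. by move=> ht; case: (Lv_facts b ht). Qed.

Lemma sig_inj t t' : t < 4 -> t' < 4 -> sig t = sig t' -> t = t'.
Proof.
move=> ht ht' E1.
case: (sig_spec ht) => hs _ W1; case: (sig_spec ht') => _ _ W2.
rewrite -E1 in W2.
have := W_conf' (W_sym W1) (W_sym W2) (Lv_allpos true hs) (Lv_allpos false ht) (Lv_allpos false ht').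
by move/Lv_inj; apply.
Qed.

Lemma sig_valid : dvalid (sig 0) (sig 1) (sig 2) (sig 3).
Proof.
have N : forall t t', t < 4 -> t' < 4 -> t != t' -> sig t != sig t'.
  by move=> t t' ht ht' ne; apply/negP => /eqP /(sig_inj ht ht') /eqP; apply/negP.
rewrite /dvalid /= !inE !negb_or.
rewrite !N //.
by case: (sig_spec (isT : 0 < 4)) => _ -> _; case: (sig_spec (isT : 1 < 4)) => _ -> _;
   case: (sig_spec (isT : 2 < 4)) => _ -> _; case: (sig_spec (isT : 3 < 4)) => _ -> _.
Qed.

Local Notation P := (pq (sig 0) (sig 1) (sig 2) (sig 3)).

Lemma P_good : structb P /\ exists2 n, n \in hints & goodb P (bitsof n).
Proof.
case/andP: ja_ok => h1 h2; case/andP: exm_ok => /andP [e1 e2] e3.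
have s4 t : t < 4 -> sig t < 4 by move=> ht; case: (sig_spec ht).
exact: (check_use (s 0) hjy jy_ok hja h1 h2 hjb jb_ok e1 e2 e3 (s4 0 isT) (s4 1 isT) (s4 2 isT) (s4 3 isT) sig_valid).
Qed.

Lemma derE_W x y : (x, y) \in derE P -> W x y.
Proof.
rewrite /derE => /mapP [t ht [-> ->]].
rewrite mem_iota /= in ht.
rewrite !Lv_pq.
have -> : sgof (sig 0) (sig 1) (sig 2) (sig 3) t = sig t by case: (t) ht => [|[|[|[|]]]].
by case: (sig_spec ht).
Qed.

Lemma medges_W x y : (x, y) \in medges P -> W x y.
Proof.
rewrite /medges mem_cat => /orP [h|]; last exact: derE_W.
exact: RW_W (realE_RW h).
Qed.


Lemma derE_mem t : t < 4 -> (Lv P0 (LH t) false, Lv P0 (LH (sig t)) true) \in medges P.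
Proof.
move=> ht; rewrite /medges mem_cat; apply/orP; right.
apply/mapP; exists t; first by rewrite mem_iota.
by case: (t) ht => [|[|[|[|]]]].
Qed.

Lemma white_pair u u' : u \in allpos -> u' \in allpos -> W u u' ->
  [\/ (u, u') \in realE P, (u', u) \in realE P |
      exists2 t, t < 4 & ((u, u') = (Lv P0 (LH t) false, Lv P0 (LH (sig t)) true) \/
                          (u', u) = (Lv P0 (LH t) false, Lv P0 (LH (sig t)) true))].
Proof.
move=> hu hu' Wu.
case: (struct_cover structb_ok hu) => [hr|hx|hl].
- case: (realends_inv hr) => x [y [hxy [Ex|Ey]]].
  + subst x; have Wxy := RW_W (realE_RW hxy).
    have hy : y \in allpos.
      by apply: (struct_bound structb_ok); rewrite mem_cat (proj2 (andP (realends_mem hxy))).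
    have E1 := W_conf' Wxy Wu hu hy hu'; subst y.
    by apply: Or31; exact: hxy.
  + subst y; have Wxy := W_sym (RW_W (realE_RW hxy)).
    have hx : x \in allpos.
      by apply: (struct_bound structb_ok); rewrite mem_cat (proj1 (andP (realends_mem hxy))).
    have E1 := W_conf' Wxy Wu hu hx hu'; subst x.
    by apply: Or32; exact: hxy.
- by case: (W_X' Wu (HX hu (exits_isexit hx)) hu hu').
- apply: Or33; case: (lefts_inv hl) => t [b [ht Eu]]; subst u.
  case: b Wu hu hl => Wu hu hl.
  + case: (@left_partner t true ht) => t' [ht' _ W2] /=.
    have E1 := W_conf' W2 Wu hu (Lv_allpos false ht') hu'; subst u'.
    case: (sig_spec ht') => hs _ W3.
    have E2 := W_conf' (W_sym W2) W3 (Lv_allpos false ht') hu (Lv_allpos true hs).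
    have E3 := Lv_inj ht hs E2; subst t.
    by exists t'; [|right].
  + case: (sig_spec ht) => hs _ W3.
    have E1 := W_conf' W3 Wu hu (Lv_allpos true hs) hu'; subst u'.
    by exists t; [|left].
Qed.


Lemma pr_pos u : pr (pos u) = pos (u.1, (u.2 + 1) %% 6).
Proof. by rewrite -pos_mod /pos /= addn1. Qed.

Lemma lt6 (i : 'I_6) : (i : nat) < 6. Proof. exact: ltn_ord. Qed.

Section Fin.
Variable n : nat.
Hypothesis hn : n \in hints.
Hypothesis gn : goodb P (bitsof n).
Local Notation bits := (bitsof n).
Local Notation np := (npart bits).
Local Notation lab := (labf P bits).

Definition Nset : {set E} := [set e : E | blue e && [exists k : 'I_5, exists i : 'I_6,
   ((np (k : nat, i : nat)).2 == (i + 1) %% 6) && joins e (pos (k : nat, i : nat)) (pr (pos (k : nat, i : nat)))]].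

Lemma np_next u : u \in allpos -> (np u).2 = (u.2 + 1) %% 6 -> np u = (u.1, (u.2 + 1) %% 6).
Proof. by move=> hu h; case: (np_facts hn hu) => _ _ h1 _ _; case: (np u) h h1 => a b /= -> ->. Qed.

Lemma inN e : e \in Nset -> blue e /\ exists2 u, u \in allpos &
   (np u).2 = (u.2 + 1) %% 6 /\ joins e (pos u) (pos (np u)).
Proof.
rewrite inE => /andP [be /existsP [k /existsP [i /andP [/eqP h J]]]].
have hu : ((k : nat), (i : nat)) \in allpos by rewrite mem_allpos /= !ltn_ord.
split=> //; exists (k : nat, i : nat) => //; split=> //.
by rewrite np_next // -pr_pos.
Qed.

Lemma N_ends e : e \in Nset -> (end1 e \in VF) && (end2 e \in VF).
Proof.
case/inN => _ [u hu [_ J]].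
case: (np_facts hn hu) => hn' _ _ _ _.
have := joins_ends e.
by move/(joins_eq J) => [[-> ->]|[-> ->]]; rewrite !pos_VF.
Qed.

Lemma N_inc e x : e \in Nset -> incident e x -> x \in VF.
Proof.
move=> he; case/andP: (N_ends he) => h1 h2.
by rewrite /incident => /orP [] /eqP <-.
Qed.

Definition Sset := contracted_edges VF Nset.

Lemma S_cases g : g \in Sset -> g \in Nset \/ (white g /\ (end1 g \in VF) || (end2 g \in VF)).
Proof. by rewrite /Sset /contracted_edges in_setU inE => /orP [|/andP []]; auto. Qed.

Lemma lab_edge g u u' : g \in Sset -> u \in allpos -> u' \in allpos ->
  joins g (pos u) (pos u') -> lab u = lab u'.
Proof.
move=> hg hu hu' J.
case: (S_cases hg) => [/inN [_ [u1 hu1 [_ J1]]]|[wg _]].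
  case: (np_facts hn hu1) => hnp _ _ _ _.
  case: (joins_eq J1 J) => [[E1 E2]|[E1 E2]].
    have := pos_inj hu hu1 E1; have := pos_inj hu' hnp E2 => -> ->.
    exact: good_np.
  have := pos_inj hu hnp E1; have := pos_inj hu' hu1 E2 => -> ->.
  by apply/esym; apply: good_np.
have Wuu : W u u' by exists g.
case: (white_pair hu hu' Wuu) => [h|h|[t ht [h|h]]].
- by apply: good_edge gn _; rewrite /medges mem_cat h.
- by apply/esym; apply: good_edge gn _; rewrite /medges mem_cat h.
- by case: h => -> ->; apply: good_edge gn _; apply: derE_mem.
- by case: h => -> ->; apply/esym; apply: good_edge gn _; apply: derE_mem.
Qed.

Definition lblv (v : V) : nat :=
  if [pick ki : 'I_5 * 'I_6 | pos (ki.1 : nat, ki.2 : nat) == v] is Some ki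
  then lab (ki.1 : nat, ki.2 : nat) else 0.

Lemma lblv_pos u : u \in allpos -> lblv (pos u) = lab u.
Proof.
move=> hu; rewrite /lblv; case: pickP => [ki /eqP E1|H].
  have hk : ((ki.1 : nat), (ki.2 : nat)) \in allpos by rewrite mem_allpos /= !ltn_ord.
  by rewrite (pos_inj hk hu E1).
exfalso; case: u hu H => k i; rewrite mem_allpos /= => /andP [hk hi] H.
by have := H (Ordinal hk, Ordinal hi); rewrite /= eqxx.
Qed.

Definition lbl (g : E) : nat := if end1 g \in VF then lblv (end1 g) else lblv (end2 g).

Lemma lbl_at g u : g \in Sset -> u \in allpos -> incident g (pos u) -> lbl g = lab u.
Proof.
move=> hg hu hi; rewrite /lbl.
case h1: (end1 g \in VF).
  have /VFP [u1 hu1 E1] := h1; rewrite E1 lblv_pos //.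
  case/orP: hi => /eqP E2.
    by rewrite E2 in E1; rewrite (pos_inj hu hu1 E1).
  apply: (lab_edge hg hu1 hu); rewrite -E1 -E2; exact: joins_ends.
case/orP: hi => /eqP E2; first by rewrite E2 pos_VF in h1.
by rewrite E2 lblv_pos.
Qed.

Lemma lbl_step g1 g2 : g1 \in Sset -> g2 \in Sset -> share_vertex g1 g2 -> lbl g1 = lbl g2.
Proof.
move=> h1 h2 sh.
have [x [i1 i2]] : exists x, incident g1 x /\ incident g2 x.
  case/orP: sh => h; [exists (end1 g2) | exists (end2 g2)]; split=> //;
  by rewrite /incident eqxx ?orbT.
case hx: (x \in VF).
  have /VFP [u hu Ex] := hx; subst x.
  by rewrite (lbl_at h1 hu i1) (lbl_at h2 hu i2).
have w1 : white g1.
  by case: (S_cases h1) => [hN|[]//]; rewrite (N_inc hN i1) in hx.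
have w2 : white g2.
  by case: (S_cases h2) => [hN|[]//]; rewrite (N_inc hN i2) in hx.
by rewrite (white_uniq HK w1 i1 w2 i2).
Qed.

Lemma connect_lbl e f :
  connect [rel g1 g2 | [&& g1 \in Sset, g2 \in Sset & share_vertex g1 g2]] e f -> lbl e = lbl f.
Proof.
case/connectP => p; elim: p e => [|g p IH] e /=; first by move=> _ ->.
case/andP => /and3P [h1 h2 sh] pth Ef.
by rewrite (lbl_step h1 h2 sh); apply: IH.
Qed.



Lemma inN_intro e u : blue e -> u \in allpos -> (np u).2 = (u.2 + 1) %% 6 ->
  joins e (pos u) (pr (pos u)) -> e \in Nset.
Proof.
move=> be; case: u => k i; rewrite mem_allpos /= => /andP [hk hi] h J.
rewrite inE be /=; apply/existsP; exists (Ordinal hk); apply/existsP; exists (Ordinal hi).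
by rewrite /= h eqxx J.
Qed.

Lemma N_form e : e \in Nset -> blue e /\ exists2 u1, u1 \in allpos &
   [/\ np u1 = (u1.1, (u1.2 + 1) %% 6), joins e (pos u1) (pr (pos u1)) & joins e (pos u1) (pos (np u1))].
Proof.
case/inN => be [u1 hu1 [h J]]; split=> //; exists u1 => //.
have E1 := np_next hu1 h.
by split=> //; rewrite pr_pos -E1.
Qed.

Lemma N_count u : u \in allpos -> #|[set e in Nset | incident e (pos u)]| = 1.
Proof.
move=> hu; case: (np_facts hn hu) => hnp hinv h1 hor hexcl.
case: hor => [hA|hB].
- case: (blue_ex HK (pos u)) => e0 b0 J0.
  apply/eqP/cards1P; exists e0; apply/setP => e; rewrite !inE.
  apply/andP/eqP => [[he0 hi]|->]; last first.
    by split; [move: (inN_intro b0 hu hA J0); rewrite inE | exact: joins_inc1 J0].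
  have he : e \in Nset by rewrite inE.
  case: (N_form he) => be [u1 hu1 [E1 J1 J1']].
  case: (joins_inc J1' hi) => Eu.
    by rewrite (pos_inj hu hu1 Eu) in J0 *; apply: (blue_uniq HK be J1 b0 J0).
  case: (np_facts hn hu1) => hnp1 hinv1 _ _ _.
  have Eu' := pos_inj hu hnp1 Eu.
  exfalso; apply: hexcl; split=> //.
  by rewrite Eu' hinv1 E1.
- set u0 := np u.
  have hn0 : np u0 = u by [].
  have Epr : pr (pos u0) = pos u.
    by rewrite pr_pos -hB h1; case: (u).
  case: (blue_ex HK (pos u0)) => e0 b0 J0.
  have hA0 : (np u0).2 = (u0.2 + 1) %% 6 by rewrite hn0.
  apply/eqP/cards1P; exists e0; apply/setP => e; rewrite !inE.
  apply/andP/eqP => [[he0 hi]|->]; last first.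
    split; first by move: (inN_intro b0 hnp hA0 J0); rewrite inE.
    by rewrite -Epr; exact: joins_inc2 J0.
  have he : e \in Nset by rewrite inE.
  case: (N_form he) => be [u1 hu1 [E1 J1 J1']].
  case: (joins_inc J1' hi) => Eu.
    have Eu1 := pos_inj hu hu1 Eu; subst u1.
    by exfalso; apply: hexcl; split=> //; rewrite E1.
  case: (np_facts hn hu1) => hnp1 hinv1 _ _ _.
  have Eu' := pos_inj hu hnp1 Eu.
  have Eu0 : u1 = u0 by rewrite /u0 Eu' hinv1.
  subst u1; exact: (blue_uniq HK be J1 b0 J0).
Qed.

Lemma blue_white (g : E) : blue g -> white g -> False.
Proof. by rewrite /blue /white; case: (pcol g). Qed.

Lemma der_pos g : g \in Sset -> derived g -> exists2 t, t < 4 & incident g (pos (Lv P0 (LH t) false)).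
Proof.
move=> hg /andP [wg nr].
case: (S_cases hg) => [/inN [bg _]|[_ h]]; first by case: (blue_white bg wg).
have /andP [h1 h2] := HnoF (introT andP (conj wg nr)) h.
have /VFP [u hu E1] := h1; have /VFP [u' hu' E2] := h2.
have J : joins g (pos u) (pos u') by rewrite -E1 -E2 joins_ends.
have Wu : W u u' by exists g.
have real_contra : forall x y, (x, y) \in realE P -> joins g (pos x) (pos y) -> False.
  move=> x y hxy Jx; case: (realE_RW hxy) => e' re' J'.
  have we' : white e' by case/andP: re'.
  have := white_uniq HK wg (joins_inc1 Jx) we' (joins_inc1 J') => Eg.
  by rewrite Eg re' in nr.
case: (white_pair hu hu' Wu) => [hr|hr|[t ht [Ep|Ep]]].
- by case: (real_contra _ _ hr J).
- by case: (real_contra _ _ hr); rewrite joinsC.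
- by exists t => //; case: Ep => <- _; exact: joins_inc1 J.
- by exists t => //; case: Ep => <- _; exact: joins_inc2 J.
Qed.

Lemma fin_safe : let S := contracted_edges VF Nset in
  (forall e, e \in Nset -> [&& blue e, end1 e \in VF & end2 e \in VF]) /\
  (forall v, v \in VF -> #|[set e in Nset | incident e v]| = 1) /\
  (forall e f, e \in S -> f \in S -> derived e -> derived f ->
     connect [rel g1 g2 | [&& g1 \in S, g2 \in S & share_vertex g1 g2]] e f -> e = f).
Proof.
split; [|split].
- by move=> e he; case/inN: (he) => ->; rewrite N_ends.
- by move=> v /VFP [u hu ->]; apply: N_count.
move=> e f he hf de df C.
have := connect_lbl C.
case: (der_pos he de) => t ht ie; case: (der_pos hf df) => t' ht' if_.
rewrite (lbl_at he (Lv_allpos false ht) ie) (lbl_at hf (Lv_allpos false ht') if_) => El.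
have Et := good_der gn ht ht' El; subst t'.
case/andP: de => we _; case/andP: df => wf _.
exact: (white_uniq HK we ie wf if_).
Qed.

End Fin.

Theorem core_safe : exists N : {set E}, let S := contracted_edges VF N in
  (forall e, e \in N -> [&& blue e, end1 e \in VF & end2 e \in VF]) /\
  (forall v, v \in VF -> #|[set e in N | incident e v]| = 1) /\
  (forall e f, e \in S -> f \in S -> derived e -> derived f ->
     connect [rel g1 g2 | [&& g1 \in S, g2 \in S & share_vertex g1 g2]] e f -> e = f).
Proof.
case: P_good => _ [n hn gn].
by exists (Nset n); apply: fin_safe.
Qed.

End Core.

Section RealBar.
Variable K : phex.
Hypothesis HK : is_pseudohex K.

Lemma real_white (e : pE K) : real e -> white e.
Proof. by case/and3P. Qed.

Lemma real_bar (e : pE K) : real e -> exists2 f, real f & joins f (vbar (end1 e)) (vbar (end2 e)).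
Proof.
case/and3P => we /existsP [f /andP [wf Jf]] /forallP Hr.
exists f => //.
have [[E1 E2]|[E1 E2]] := joins_eq Jf (joins_ends f).
- apply/and3P; split=> //.
    by apply/existsP; exists e; rewrite we E1 E2 !(vbarK HK) joins_ends.
  apply/forallP => r; apply/implyP => rr; apply/implyP => ant.
  have := Hr r; rewrite rr /= => /implyP; rewrite E1 E2 !(vbarK HK) in ant *.
  move=> H; have := H (ltac:(by move: ant; do 4 case: (incident r _)));
  by rewrite ![joins r (vbar _) _]joinsC.
- apply/and3P; split=> //.
    by apply/existsP; exists e; rewrite we E1 E2 !(vbarK HK) joinsC joins_ends.
  apply/forallP => r; apply/implyP => rr; apply/implyP => ant.
  have := Hr r; rewrite rr /= => /implyP; rewrite E1 E2 !(vbarK HK) in ant *.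
  move=> H; have := H (ltac:(by move: ant; do 4 case: (incident r _)));
  by rewrite ![joins r (vbar _) _]joinsC orbC.
Qed.

End RealBar.

Section Main.
Variables (K K' : phex) (phi : hexT K' + 'I_5 -> hexT K) (g1 g2 g3 : hexT K').
Hypothesis HK : is_pseudohex K.
Hypothesis PK : proper_pseudohex K.
Hypothesis HF : F_addition phi g1 g2 g3.
Local Notation V := (pV K).
Local Notation E := (pE K).
Local Notation VF := (vset_of (F_K phi)).
Hypothesis Hno : forall e : E, no_edge VF e -> (end1 e \in VF) && (end2 e \in VF).

Lemma Hnoend : forall e : E, ~ is_end e.
Proof. by case: PK. Qed.

Lemma no2 : GK_no_2cycle K.
Proof. by case: PK => _ []. Qed.

Lemma phi_bij : bijective phi.
Proof. by case: HF. Qed.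

Lemma phi_inj : injective phi.
Proof. exact: bij_inj phi_bij. Qed.

Lemma phi_surj h : exists s, phi s = h.
Proof. by case: phi_bij => g _ H; exists (g h); rewrite H. Qed.

Lemma adjE u v : GK_adj (phi u) (phi v) = fork_sum_adj (@GK_adj K') g1 g2 g3 u v.
Proof. by case: HF => _ [_ [_ [_ [_ H]]]]. Qed.

Lemma hexval_eq (h1 h2 : hexT K) v : v \in val h1 -> v \in val h2 -> h1 = h2.
Proof. by move=> a b; apply: val_inj; rewrite (hexT_val HK a) (hexT_val HK b). Qed.

Lemma memVF v : v \in VF -> exists p : 'I_5, v \in val (phi (inr p)).
Proof.
rewrite /vset_of inE => /existsP [h /andP [/imsetP [p _ ->] hv]].
by exists p.
Qed.

Lemma memVF' v (p : 'I_5) : v \in val (phi (inr p)) -> v \in VF.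
Proof.
move=> hv; rewrite /vset_of inE; apply/existsP; exists (phi (inr p)).
by rewrite hv andbT; apply/imsetP; exists p.
Qed.

Lemma outside g v : v \in val (phi (inl g)) -> v \notin VF.
Proof.
move=> hv; apply/negP => /memVF [p hp].
by have := phi_inj (hexval_eq hv hp).
Qed.

Lemma GK_real (h1 h2 : hexT K) : GK_adj h1 h2 ->
  exists e : E, exists u, exists w, [/\ real e, joins e u w, u \in val h1 & w \in val h2].
Proof.
case/andP => _ /existsP [e /andP [re /orP [] /andP [a b]]].
  by exists e, (end1 e), (end2 e); rewrite joins_ends.
by exists e, (end2 e), (end1 e); rewrite joinsC joins_ends.
Qed.

Definition o0 : 'I_5 := @Ordinal 5 0 isT.
Definition o1 : 'I_5 := @Ordinal 5 1 isT.
Definition o2 : 'I_5 := @Ordinal 5 2 isT.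
Definition o3 : 'I_5 := @Ordinal 5 3 isT.
Definition o4 : 'I_5 := @Ordinal 5 4 isT.

Lemma adjF (p q : 'I_5) : fork_adj p q -> GK_adj (phi (inr p)) (phi (inr q)).
Proof. by rewrite adjE. Qed.

Lemma adjG (p : 'I_5) g : fork_attach g1 g2 g3 p g -> GK_adj (phi (inr p)) (phi (inl g)).
Proof. by rewrite adjE. Qed.

Lemma hex_vbarE (v : V) : hex_of (vbar v) = hex_of v.
Proof. exact: (hex_same HK (hex_vbar HK v)). Qed.

Lemma no2c (e f : E) a b c d : real e -> real f -> joins e a b -> joins f c d ->
  hex_of a = hex_of c -> hex_of b = hex_of d -> hex_of a != hex_of b -> c = a \/ c = vbar a.
Proof.
move=> re rf Je Jf hac hbd hab.
have key : joins f (end1 e) (end2 e) || joins f (vbar (end1 e)) (vbar (end2 e)).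
  apply: (no2 re rf).
    by case: (joins_eq Je (joins_ends e)) => [[-> ->]|[-> ->]] //; rewrite eq_sym.
  case: (joins_eq Je (joins_ends e)) => [[-> ->]|[-> ->]];
  case: (joins_eq Jf (joins_ends f)) => [[-> ->]|[-> ->]];
  by rewrite -hac -hbd !eqxx ?orbT.
have key2 : joins f a b || joins f (vbar a) (vbar b).
  case: (joins_eq Je (joins_ends e)) => [[E1 E2]|[E1 E2]]; rewrite E1 E2 in key => //.
  by rewrite [joins f b a]joinsC [joins f (vbar b) _]joinsC in key.
case/orP: key2 => J.
  left; case: (joins_eq J Jf) => [[-> _]|[E3 _]] //.
  by move/eqP: hab; rewrite hac E3 hbd.
right; case: (joins_eq J Jf) => [[-> _]|[E3 _]] //.
by move/eqP: hab; rewrite hac E3 hex_vbarE hbd.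
Qed.


Lemma barRW (e : E) a b : real e -> joins e a b -> exists2 f, real f & joins f (vbar a) (vbar b).
Proof.
move=> re J; case: (real_bar HK re) => f rf Jf; exists f => //.
case: (joins_eq J (joins_ends e)) => [[E1 E2]|[E1 E2]]; rewrite E1 E2 in Jf => //.
by rewrite joinsC.
Qed.

Lemma hexOf_proof (v : V) : is_hexagon (hex_of v).
Proof. by apply/existsP; exists v. Qed.

Definition hexOf (v : V) : hexT K := exist _ (hex_of v) (hexOf_proof v).

Lemma out_hex w : w \notin VF -> exists g, w \in val (phi (inl g)).
Proof.
move=> hw; case: (phi_surj (hexOf w)) => [[g|p] E1]; first by exists g; rewrite E1 /= hex_self.
by move: hw; rewrite (memVF' (p := p)) // E1 /= hex_self.
Qed.

Lemma adj_out (p : 'I_5) g (e : E) a w : real e -> joins e a w ->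
  a \in val (phi (inr p)) -> w \in val (phi (inl g)) -> fork_attach g1 g2 g3 p g.
Proof.
move=> re J ha hw.
have : GK_adj (phi (inr p)) (phi (inl g)).
  apply/andP; split.
    by apply/negP => /eqP /phi_inj.
  apply/existsP; exists e; rewrite re /=.
  by case: (joins_eq J (joins_ends e)) => [[-> ->]|[-> ->]]; rewrite ha hw ?orbT.
by rewrite adjE.
Qed.

Lemma exit_class (bk : nat -> V) (p : 'I_5) g (e5 : E) u5 o5 x' :
  val (phi (inr p)) = hex_of (bk p) ->
  real e5 -> joins e5 u5 o5 -> u5 = pos bk ((p : nat), x') ->
  o5 \in val (phi (inl g)) ->
  forall (u : posn) (e : E) w, u.1 = (p : nat) -> real e -> joins e (pos bk u) w ->
  w \in val (phi (inl g)) ->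
  (pos bk u = pos bk ((p : nat), x') \/ pos bk u = pos bk ((p : nat), (x' + 3) %% 6)).
Proof.
move=> Hk r5 J5 E5 ho5 u e w Eu re J hw.
have Hu : pos bk u \in val (phi (inr p)).
  by rewrite Hk /pos Eu; apply: hex_iter.
have Hu5 : u5 \in val (phi (inr p)).
  by rewrite Hk E5 /pos /=; apply: hex_iter.
have h1 : hex_of u5 = hex_of (pos bk u) by rewrite -(hexT_val HK Hu5) -(hexT_val HK Hu).
have h2 : hex_of o5 = hex_of w by rewrite -(hexT_val HK ho5) -(hexT_val HK hw).
have h3 : hex_of u5 != hex_of o5.
  apply/negP => /eqP E1.
  have : phi (inr p) = phi (inl g) by apply: val_inj; rewrite (hexT_val HK Hu5) (hexT_val HK ho5) E1.
  by move/phi_inj.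
case: (no2c r5 re J5 J h1 h2 h3) => ->; [left | right] => //.
by rewrite E5 vbar_pos.
Qed.


Lemma ordE (p : 'I_5) : p = o0 \/ p = o1 \/ p = o2 \/ p = o3 \/ p = o4.
Proof.
case: p => [[|[|[|[|[|m]]]]] hp] //;
  [left|right; left|right; right; left|right; right; right; left|right; right; right; right];
  by apply: val_inj.
Qed.

Lemma fa0 : fork_attach g1 g2 g3 o0 g1. Proof. by rewrite /fork_attach /= eqxx. Qed.
Lemma fa1 : fork_attach g1 g2 g3 o1 g2. Proof. by rewrite /fork_attach /= eqxx. Qed.
Lemma fa4 : fork_attach g1 g2 g3 o4 g3. Proof. by rewrite /fork_attach /= eqxx. Qed.

Theorem main_safe : safely_reducible (F_K phi).
Proof.
have [e1 [u1 [w1 [r1 J1 hu1 hw1]]]] := GK_real (adjF (p:=o0) (q:=o2) isT).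
have [e2 [u2 [t2 [r2 J2 hu2 ht2]]]] := GK_real (adjF (p:=o1) (q:=o2) isT).
have [e3 [u3 [t3 [r3 J3 hu3 ht3]]]] := GK_real (adjF (p:=o3) (q:=o2) isT).
have [e4 [u4 [t4 [r4 J4 hu4 ht4]]]] := GK_real (adjF (p:=o4) (q:=o3) isT).
have [e5 [u5 [o5 [r5 J5 hu5 ho5]]]] := GK_real (adjG fa0).
have [e6 [u6 [o6 [r6 J6 hu6 ho6]]]] := GK_real (adjG fa1).
have [e7 [u7 [o7 [r7 J7 hu7 ho7]]]] := GK_real (adjG fa4).
pose bk (k : nat) : V := match k with 0 => u1 | 1 => u2 | 2 => w1 | 3 => u3 | _ => u4 end.
have Hk : forall p : 'I_5, val (phi (inr p)) = hex_of (bk p).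
  move=> p; case: (ordE p) => [->|[->|[->|[->|->]]]].
  - by rewrite (hexT_val HK hu1).
  - by rewrite (hexT_val HK hu2).
  - by rewrite (hexT_val HK hw1).
  - by rewrite (hexT_val HK hu3).
  - by rewrite (hexT_val HK hu4).
rewrite (Hk o2) in hw1 ht2 ht3; rewrite (Hk o3) in ht4 hu3; rewrite (Hk o0) in hu5;
rewrite (Hk o1) in hu6; rewrite (Hk o4) in hu7.
case/hexP: ht2 => jy hjy Et2; case/hexP: ht3 => ja hja Et3; case/hexP: ht4 => jb hjb Et4.
case/hexP: hu5 => ex' hex Eu5; case/hexP: hu6 => ey' hey Eu6; case/hexP: hu7 => eb' heb Eu7.
have VFP : forall v, v \in VF <-> exists2 u, u \in allpos & v = pos bk u.
  move=> v; split.
    move/memVF => [p hp]; rewrite Hk in hp; case/hexP: hp => i hi ->.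
    by exists ((p : nat), i); rewrite // mem_allpos /= ltn_ord hi.
  case=> [[k i]] hu ->; rewrite mem_allpos /= in hu; case/andP: hu => hk hi.
  by apply: (memVF' (p := Ordinal hk)); rewrite Hk /pos /=; apply: hex_iter.
have pos_inj : forall u u', u \in allpos -> u' \in allpos -> pos bk u = pos bk u' -> u = u'.
  move=> [k i] [k' i']; rewrite !mem_allpos /= => /andP [hk hi] /andP [hk' hi'] E1.
  have a : pos bk (k, i) \in val (phi (inr (Ordinal hk))) by rewrite Hk; apply: hex_iter.
  have b : pos bk (k', i') \in val (phi (inr (Ordinal hk'))) by rewrite Hk; apply: hex_iter.
  rewrite E1 in a; have := phi_inj (hexval_eq a b) => [[Ek]]; subst k'.
  by rewrite (iter_inj HK hi hi' E1).
have HW1 : RW bk (0,0) (2,0) by exists e1.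
have HW2 : RW bk (0,3) (2,3) by have [f rf Jf] := barRW r1 J1; exists f.
rewrite Et2 in J2; rewrite Et3 in J3; rewrite Et4 in J4.
have HW3 : RW bk (1,0) (2,jy) by exists e2.
have HW4 : RW bk (1,3) (2,(jy + 3) %% 6).
  by have [f rf Jf] := barRW r2 J2; exists f => //; rewrite -(vbar_pos HK).
have HW5 : RW bk (3,0) (2,ja) by exists e3.
have HW6 : RW bk (3,3) (2,(ja + 3) %% 6).
  by have [f rf Jf] := barRW r3 J3; exists f => //; rewrite -(vbar_pos HK).
have HW7 : RW bk (4,0) (3,jb) by exists e4.
have HW8 : RW bk (4,3) (3,(jb + 3) %% 6).
  by have [f rf Jf] := barRW r4 J4; exists f => //; rewrite -(vbar_pos HK).
have exitX : forall (p : 'I_5) g (e : E) u o x', real e -> joins e u o -> u = pos bk ((p : nat), x') ->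
    o \in val (phi (inl g)) -> Xout bk VF ((p : nat), x') /\ Xout bk VF ((p : nat), (x' + 3) %% 6).
  move=> p g e u o x' re J Eu ho; split.
    exists e; first exact: real_white re.
    by exists o; [rewrite -Eu | apply: outside ho].
  have [f rf Jf] := barRW re J; exists f; first exact: real_white rf.
  exists (vbar o); first by rewrite -(vbar_pos HK) -Eu.
  by apply: (outside (g := g)); rewrite (hexT_val HK ho) hex_vbar.
have HX : forall u, u \in allpos -> isexit ex' ey' eb' u -> Xout bk VF u.
  move=> [k i]; rewrite mem_allpos /= => /andP [hk hi].
  rewrite /isexit /= => /or3P [] /andP [/eqP Ek /eqP Ei]; subst k.
  - case: (exitX o0 g1 e5 u5 o5 ex' r5 J5 Eu5 ho5) => X1 X2.
    by case: (mod3_cases hi hex Ei) => ->.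
  - case: (exitX o1 g2 e6 u6 o6 ey' r6 J6 Eu6 ho6) => X1 X2.
    by case: (mod3_cases hi hey Ei) => ->.
  - case: (exitX o4 g3 e7 u7 o7 eb' r7 J7 Eu7 ho7) => X1 X2.
    by case: (mod3_cases hi heb Ei) => ->.
have Hout : forall u (e : E) w, u \in allpos -> white e -> joins e (pos bk u) w -> w \notin VF ->
    isexit ex' ey' eb' u.
  move=> [k i] e w hu we J hw.
  have hpVF : pos bk (k, i) \in VF by apply/VFP; exists (k, i).
  have re : real e.
    apply/negPn/negP => nre.
    have : no_edge VF e.
      rewrite /no_edge /derived we nre /=.
      by case: (joins_eq J (joins_ends e)) => [[-> _]|[_ ->]]; rewrite hpVF ?orbT.
    move/Hno; case: (joins_eq J (joins_ends e)) => [[_ ->]|[-> _]] /andP [h1 h2].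
      by rewrite h2 in hw.
    by rewrite h1 in hw.
  move: hu; rewrite mem_allpos /= => /andP [hk hi].
  case: (out_hex hw) => g hwg.
  have hpu : pos bk (k, i) \in val (phi (inr (Ordinal hk))) by rewrite Hk; apply: hex_iter.
  have := adj_out re J hpu hwg; rewrite /fork_attach /=.
  case/or3P => /andP [/eqP Ek /eqP Eg]; subst k g; rewrite /isexit /=.
  - have Hc := exit_class (p := o0) (Hk o0) r5 J5 Eu5 ho5 (u := (0, i)) erefl re J hwg.
    suff H : i %% 3 == ex' %% 3 by rewrite H ?orbT.
    case: Hc => /pos_inj.
      by move=> /(_ (allpos_mk (isT : 0 < 5) hi) (allpos_mk (isT : 0 < 5) hex)) [->].
    move=> /(_ (allpos_mk (isT : 0 < 5) hi) (allpos_mk (isT : 0 < 5) (bnd3 hex))) [->].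
    by rewrite modn_dvdm // modnDr.
  - have Hc := exit_class (p := o1) (Hk o1) r6 J6 Eu6 ho6 (u := (1, i)) erefl re J hwg.
    suff H : i %% 3 == ey' %% 3 by rewrite H ?orbT.
    case: Hc => /pos_inj.
      by move=> /(_ (allpos_mk (isT : 1 < 5) hi) (allpos_mk (isT : 1 < 5) hey)) [->].
    move=> /(_ (allpos_mk (isT : 1 < 5) hi) (allpos_mk (isT : 1 < 5) (bnd3 hey))) [->].
    by rewrite modn_dvdm // modnDr.
  - have Hc := exit_class (p := o4) (Hk o4) r7 J7 Eu7 ho7 (u := (4, i)) erefl re J hwg.
    suff H : i %% 3 == eb' %% 3 by rewrite H ?orbT.
    case: Hc => /pos_inj.
      by move=> /(_ (allpos_mk (isT : 4 < 5) hi) (allpos_mk (isT : 4 < 5) heb)) [->].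
    move=> /(_ (allpos_mk (isT : 4 < 5) hi) (allpos_mk (isT : 4 < 5) (bnd3 heb))) [->].
    by rewrite modn_dvdm // modnDr.
have HnoF : forall e : E, derived e -> (end1 e \in VF) || (end2 e \in VF) ->
   (end1 e \in VF) && (end2 e \in VF).
  by move=> e de h; apply: Hno; rewrite /no_edge de h.
have := core_safe HK Hnoend VFP pos_inj hjy hja hjb hex hey heb HW1 HW2 HW3 HW4 HW5 HW6 HW7 HW8 HX Hout HnoF.
by case=> N HN; exists N.
Qed.

End Main.


Theorem mainTheorem6 (K K' : phex) (phi : hexT K' + 'I_5 -> hexT K)
    (g1 g2 g3 : hexT K') :
  is_pseudohex K -> is_pseudohex K' -> proper_pseudohex K -> proper_pseudohex K' ->
  F_addition phi g1 g2 g3 ->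
  (forall e : pE K, no_edge (vset_of (F_K phi)) e ->
     (end1 e \in vset_of (F_K phi)) && (end2 e \in vset_of (F_K phi))) ->
  safely_reducible (F_K phi).
Proof.
move=> HK _ PK _ HF Hno.
exact: (main_safe HK PK HF Hno).
Qed.
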